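(* Let $b\ge2$ and $e\ge2$ be integers. For every integer $h\ge1$ there are infinitely many $e$-power $b$-happy numbers of height exactly $h$.
   Context: For integers $b>1$, $e>1$ and a positive integer $n=\sum_{i=0}^{r} d_i b^i$ written in base $b$ (digits $0\le d_i\le b-1$), the $e$-power base-$b$ happy function is $S_{e,b}(n)=\sum_{i=0}^{r} d_i^e$. A positive integer $n$ is $e$-power $b$-happy if $S_{e,b}^{\ell}(n)=1$ for some $\ell\ge 1$ ($S^\ell$ the $\ell$-fold iterate). The height of $1$ is $0$, and the height of a happy number $n>1$ is the least $\ell\ge1$ with $S_{e,b}^{\ell}(n)=1$. *)

(* Defs.v *)
From mathcomp Require Import all_boot.
Set Implicit Arguments. Unset Strict Implicit. Unset Printing Implicit Defensive.

(* Base-b digits of n, least significant first; fuel n suffices since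
   each step divides by b >= 2.  For b <= 1 the result is meaningless
   but the theorem assumes b >= 2. *)
Fixpoint digits_fuel (fuel b n : nat) : seq nat :=
  match fuel with
  | 0 => [::]
  | fuel'.+1 => if n == 0 then [::] else (n %% b) :: digits_fuel fuel' b (n %/ b)
  end.

Definition digits (b n : nat) : seq nat := digits_fuel n b n.

Definition S (e b n : nat) : nat := \sum_(d <- digits b n) d ^ e.

Definition happy (e b n : nat) : Prop :=
  0 < n /\ exists l, 0 < l /\ iter l (S e b) n = 1.

Definition happy_height (e b n h : nat) : Prop :=
  happy e b n /\
  ((n = 1 /\ h = 0) \/
   (1 < n /\ 0 < h /\ iter h (S e b) n = 1 /\
    forall l, 0 < l -> l < h -> iter l (S e b) n <> 1)).

(* Main.v *)
Require Import Defs.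
From mathcomp Require Import all_boot.
From mathcomp Require Import zify.

Section H.
Variables b e : nat.
Hypothesis hb : 2 <= b.
Hypothesis he : 2 <= e.

Lemma divb_lt n : 0 < n -> n %/ b < n.
Proof. move=> n0; rewrite ltn_divLR; last by lia. nia. Qed.

Lemma fuel_succ f n : n <= f -> digits_fuel f.+1 b n = digits_fuel f b n.
Proof.
elim: f n => [|f IH] n hn.
  by have -> : n = 0 by lia.
change ((if n == 0 then [::] else (n %% b) :: digits_fuel f.+1 b (n %/ b)) =
  (if n == 0 then [::] else (n %% b) :: digits_fuel f b (n %/ b))).
case: eqP => // /eqP n0.
rewrite IH //.
have := divb_lt n; lia.
Qed.

Lemma fuel_ok f n : n <= f -> digits_fuel f b n = digits b n.
Proof.
elim: f => [|f IH] hn; first by have -> : n = 0 by lia.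
case: (ltnP n f.+1) => h.
  rewrite fuel_succ; last by lia. by apply IH; lia.
by have -> : n = f.+1 by lia.
Qed.

Lemma S_rec n : 0 < n -> S e b n = (n %% b) ^ e + S e b (n %/ b).
Proof.
case: n => [//|n] _.
rewrite /S /digits /= fuel_ok ?big_cons //.
have := divb_lt n.+1; lia.
Qed.

Lemma S0 : S e b 0 = 0.
Proof. by rewrite /S /digits /= big_nil. Qed.

Lemma S_mulb n : S e b (n * b) = S e b n.
Proof.
case: n => [|n]; first by rewrite mul0n.
rewrite S_rec; last by nia.
rewrite modnMl mulnK; last by lia.
by rewrite exp0n //; lia.
Qed.

Fixpoint R k := if k is k'.+1 then R k' * b + 1 else 0.

Lemma S_R k : S e b (R k) = k.
Proof.
elim: k => [|k IH] /=; first exact: S0.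
rewrite S_rec; last by lia.
rewrite modnMDl (modn_small (_ : 1 < b)) //.
rewrite divnMDl; last by lia.
rewrite divn_small // addn0 exp1n IH. lia.
Qed.

Lemma R_pos k : 0 < k -> 0 < R k.
Proof. case: k => //= k _; lia. Qed.

Lemma S_T j x : S e b (R x * b ^ j) = x.
Proof.
elim: j => [|j IH]; first by rewrite expn0 muln1 S_R.
by rewrite expnSr mulnA S_mulb.
Qed.

Definition P h x := iter h (S e b) x = 1 /\ forall l, l < h -> iter l (S e b) x <> 1.

Lemma step h x : P h x -> forall N, exists n, N < n /\ P h.+1 n.
Proof.
move=> [H1 H2] N.
have x0 : 0 < x.
  case: x H1 H2 => // H1 H2.
  have : iter h (S e b) 0 = 0 by elim: h {H1 H2} => //= h ->; exact: S0.
  by rewrite H1.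
exists (R x * b ^ N.+1).
have hj : N.+1 < b ^ N.+1 by apply: ltn_expl; lia.
have hr : 0 < R x by apply: R_pos.
split; first by nia.
split; first by rewrite iterSr S_T.
case=> [|l] hl /=.
  nia.
rewrite -iterS iterSr S_T; apply: H2; lia.
Qed.

Lemma exP h : exists x, P h x.
Proof.
elim: h => [|h [x Hx]]; first by exists 1; split => // l.
by have [n [_ Hn]] := @step h x Hx 0; exists n.
Qed.

End H.

Theorem mainTheorem6 (b e : nat) (hb : 2 <= b) (he : 2 <= e) :
  forall h : nat, 1 <= h ->
    forall N : nat, exists n : nat, N < n /\ happy_height e b n h.
Proof.
case=> [//|h] _ N.
have [x Hx] := @exP b e hb he h.
have [n [Nn [H1 H2]]] := @step b e hb he h x Hx (maxn N 1).
exists n; split; first by lia.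
split; first by split; [lia | exists h.+1].
right; split; first by lia.
split => //; split; first exact: H1.
move=> l l0 lh; exact: H2.
Qed.
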